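(* Let $D\ge2$ and $k\ge2$. There exist constants $c,C_k>0$ depending only on $D$ and $k$ such that: let $0<\varepsilon<c$ and $E\subset\mathbb R^D$ with $2\leq\mathrm{card}(E)\leq k$. Then there exist $\tau$ with $\exp(-C_k/\varepsilon)\mathrm{diam}(E)\leq\tau\leq\exp(-1/\varepsilon)\mathrm{diam}(E)$ and a partition of $E$ into subsets $E_\nu$ ($\nu=1,\dots,\nu_{\max}$) such that $\mathrm{card}(E_\nu)\leq k-1$ for all $\nu$, $\mathrm{diam}(E_\nu)\leq\exp(-5/\varepsilon)\tau$ for all $\nu$, and $\mathrm{dist}(E_\nu,E_{\nu'})\geq\tau$ for all $\nu\neq\nu'$. *)

(* Defs.v *)
From HB Require Import structures.
From mathcomp Require Import all_boot all_order all_algebra.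
From mathcomp Require Import reals.
From mathcomp Require Import sequences exp.
Set Implicit Arguments. Unset Strict Implicit. Unset Printing Implicit Defensive.
Import Order.TTheory GRing.Theory Num.Theory.
Local Open Scope ring_scope.

Definition edist (R : realType) (D : nat) (x y : 'rV[R]_D) : R :=
  Num.sqrt (\sum_(i < D) (x ord0 i - y ord0 i) ^+ 2).

(* diameter of a finite set given as a list: max of pairwise distances
   (0 for the empty or singleton set). *)
Definition diam (R : realType) (D : nat) (s : seq 'rV[R]_D) : R :=
  \big[Num.max/0]_(x <- s) \big[Num.max/0]_(y <- s) edist x y.

Definition dist_ge (R : realType) (D : nat) (A B : seq 'rV[R]_D) (t : R) : Prop :=
  forall x y, x \in A -> y \in B -> t <= edist x y.

(* P is a partition of the finite set E (E duplicate-free) into nonempty blocks *)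
Definition is_partition (T : eqType) (P : seq (seq T)) (E : seq T) : Prop :=
  perm_eq (flatten P) E /\ (forall B, B \in P -> B != [::]).

(* Main.v *)
Require Import Defs.
From HB Require Import structures.
From mathcomp Require Import all_boot all_order all_algebra.
From mathcomp Require Import reals.
From mathcomp Require Import sequences exp.
From mathcomp Require Import ring lra zify.
Import Order.TTheory GRing.Theory Num.Theory.
Local Open Scope ring_scope.

Lemma edist_sqr {R : realType} {D : nat} (x y : 'rV[R]_D) :
  edist x y ^+ 2 = \sum_(i < D) (x ord0 i - y ord0 i) ^+ 2.
Proof. by rewrite /edist sqr_sqrtr // sumr_ge0 // => i _; exact: sqr_ge0. Qed.

Lemma edist_ge0 {R : realType} {D : nat} (x y : 'rV[R]_D) : 0 <= edist x y.
Proof. exact: sqrtr_ge0. Qed.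

Lemma edist_sym {R : realType} {D : nat} (x y : 'rV[R]_D) : edist x y = edist y x.
Proof. by rewrite /edist; congr Num.sqrt; apply: eq_bigr => i _; rewrite -sqrrN opprB. Qed.

Lemma edist_xx {R : realType} {D : nat} (x : 'rV[R]_D) : edist x x = 0.
Proof. by rewrite /edist big1 ?sqrtr0 // => i _; rewrite subrr expr0n. Qed.

Lemma edist_lt2 {R : realType} {D : nat} {a : R} {u x v : 'rV[R]_D} :
  edist u x < a -> edist x v < a -> edist u v < 2 * a.
Proof.
move=> h1 h2.
have g1 := edist_ge0 u x; have g2 := edist_ge0 x v; have g3 := edist_ge0 u v.
have hs : edist u v ^+ 2 <= 2 * edist u x ^+ 2 + 2 * edist x v ^+ 2.
  rewrite !edist_sqr !mulr_sumr -big_split /=; apply: ler_sum => i _.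
  have := sqr_ge0 (u ord0 i + v ord0 i - 2 * x ord0 i); nra.
nra.
Qed.

Lemma edist_pos {R : realType} {D : nat} {x y : 'rV[R]_D} : x != y -> 0 < edist x y.
Proof.
move=> xy; rewrite /edist sqrtr_gt0.
have [i hi] : exists i, x ord0 i != y ord0 i.
  apply/existsP; apply: contraR xy => /existsPn H; apply/eqP/rowP => i.
  by move: (H i); rewrite negbK => /eqP.
rewrite (bigD1 i) //=.
have h1 : 0 < (x ord0 i - y ord0 i) ^+ 2.
  by rewrite lt_def sqr_ge0 andbT sqrf_eq0 subr_eq0.
have h2 : 0 <= \sum_(j < D | j != i) (x ord0 j - y ord0 j) ^+ 2.
  by apply: sumr_ge0 => j _; exact: sqr_ge0.
lra.
Qed.

Lemma diam_le {R : realType} {D : nat} (s : seq 'rV[R]_D) (a : R) :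
  0 <= a -> (forall x y, x \in s -> y \in s -> edist x y <= a) -> diam s <= a.
Proof.
move=> a0 H; rewrite /diam big_seq; apply: bigmax_le => // x xs.
by rewrite big_seq; apply: bigmax_le => // y ys; exact: H.
Qed.

Lemma diam_ge {R : realType} {D : nat} (s : seq 'rV[R]_D) x y :
  x \in s -> y \in s -> edist x y <= diam s.
Proof.
move=> xs ys; apply: (le_trans (le_bigmax_seq 0 y xpredT (edist x) ys isT)).
exact: (le_bigmax_seq 0 x xpredT (fun x => \big[Num.max/0]_(y <- s) edist x y) xs isT).
Qed.

Lemma count_lt (T : Type) (p q : pred T) s : (forall v, p v -> q v) ->
  has (fun v => q v && ~~ p v) s -> (count p s < count q s)%N.
Proof.
move=> Hpq; elim: s => //= v s IH /orP[/andP[qv npv] | hs].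
  rewrite qv (negbTE npv) add0n add1n ltnS; exact: sub_count.
have := IH hs; case pv: (p v); first by rewrite (Hpq _ pv) /= !add1n ltnS.
by case: (q v) => /= h; rewrite ?add0n ?add1n //; apply: ltnW.
Qed.

Lemma uniq_flatten_disj (T : eqType) (Q : seq (seq T)) : uniq Q ->
  (forall B, B \in Q -> uniq B) ->
  (forall B B' z, B \in Q -> B' \in Q -> z \in B -> z \in B' -> B = B') ->
  uniq (flatten Q).
Proof.
elim: Q => //= B Q IH /andP[BnQ uQ] Hu Hd.
rewrite cat_uniq Hu ?mem_head //= IH //; first last.
- by move=> B1 B2 z h1 h2; apply: Hd; rewrite inE ?h1 ?h2 orbT.
- by move=> B1 h1; apply: Hu; rewrite inE h1 orbT.
rewrite andbT; apply/hasPn => z /flattenP [B' B'Q zB']; apply/negP => zB.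
have e := Hd B B' z (mem_head _ _) (mem_behead (s:=B :: Q) B'Q) zB zB'.
by rewrite e B'Q in BnQ.
Qed.

Theorem lemma2p2 (R : realType) (D k : nat) :
  (2 <= D)%N -> (2 <= k)%N ->
  exists c Ck : R, 0 < c /\ 0 < Ck /\
  forall (eps : R) (E : seq 'rV[R]_D),
    0 < eps -> eps < c ->
    uniq E -> (2 <= size E <= k)%N ->
    exists (tau : R) (P : seq (seq 'rV[R]_D)),
      expR (- (Ck / eps)) * diam E <= tau /\
      tau <= expR (- (1 / eps)) * diam E /\
      is_partition P E /\
      (forall B, B \in P -> (size B <= k.-1)%N) /\
      (forall B, B \in P -> diam B <= expR (- (5 / eps)) * tau) /\
      (forall i j, (i < size P)%N -> (j < size P)%N -> i != j ->
         dist_ge (nth [::] P i) (nth [::] P j) tau).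
Proof.
move=> D2 k2; exists 1, (1 + 5 * (k * k)%:R).
split; first exact: ltr01.
split; first by have := ler0n R (k * k); lra.
move=> eps E eps0 eps1 uE /andP[E2 Ek].
have d0 : 0 < diam E.
  clear Ek; case: E uE E2 => [|x [|y E]] //= /andP[xE _] _.
  have xy : x != y by apply: contraNneq xE => ->; rewrite mem_head.
  have h1 := edist_pos xy.
  have h2 : edist x y <= diam [:: x, y & E] by apply: diam_ge; rewrite !inE eqxx ?orbT.
  lra.
set d := diam E.
set q := expR (- (5 / eps)).
have q0 : 0 < q by exact: expR_gt0.
have q2 : 2 * q <= 1.
  have hq : q * expR (5 / eps) = 1 by rewrite /q expRN mulVf // gt_eqF // expR_gt0.
  have h5 : 1 <= 5 / eps by rewrite ler_pdivlMr // mul1r; lra.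
  have := expR_ge1Dx (5 / eps); nra.
set e1 := expR (- (1 / eps)).
have e10 : 0 < e1 by exact: expR_gt0.
have e11 : e1 <= 1 by rewrite /e1 expR_le1 oppr_le0 divr_ge0 // ltW.
pose t j := q ^+ j * (e1 * d).
have t0 : forall j, 0 < t j by move=> j; rewrite /t mulr_gt0 // ?exprn_gt0 // mulr_gt0.
have tS : forall j, t j.+1 = q * t j by move=> j; rewrite /t exprS -mulrA.
have tle : forall j, t j <= e1 * d.
  move=> j; rewrite /t; apply: ler_piMl; first by rewrite ltW // mulr_gt0.
  apply: exprn_ile1; [exact: ltW|lra].
pose L := [seq edist x y | x <- E, y <- E].
pose hit j := has (fun v => (t j.+1 <= v) && (v < t j)) L.
have [j jN nh] : exists2 j, (j <= k * k)%N & ~~ hit j.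
  case: (boolP (all hit (iota 0 (k * k).+1))) => [/allP Hall | /allPn [j jin nh]];
    last by exists j => //; move: jin; rewrite mem_iota add0n ltnS.
  pose g j := count (fun v => t j <= v) L.
  have Hg : forall j, (j <= (k * k).+1)%N -> (j <= g j)%N.
    elim => // j IH jlt.
    have hj : hit j by apply: Hall; rewrite mem_iota add0n.
    apply: leq_ltn_trans (IH (ltnW jlt)) _.
    have H1 : forall v, t j <= v -> t j.+1 <= v.
      by move=> v hv; apply: le_trans hv; rewrite tS; have := t0 j; nra.
    have H2 : has (fun v => (t j.+1 <= v) && ~~ (t j <= v)) L.
      by move: hj; apply: sub_has => v /andP[h1 h2]; rewrite h1 /= -ltNge h2.
    exact: (count_lt _ _ _ L H1 H2).
  have := Hg _ (leqnn _); move=> /leq_trans/(_ (count_size _ _)).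
  rewrite size_allpairs => h; exfalso.
  have := leq_mul Ek Ek; move: h; rewrite /=; lia.
set tau := t j.
set a := t j.+1.
have ha : a = q * tau by rewrite /a tS.
have a0 : 0 < a := t0 _.
have tau0 : 0 < tau := t0 _.
have gap : forall u v, u \in E -> v \in E -> edist u v < tau -> edist u v < a.
  move=> u v uE' vE h; move/hasPn: nh => /(_ (edist u v) (allpairs_f _ uE' vE)).
  by rewrite h andbT -ltNge.
pose r (u v : 'rV[R]_D) := edist u v < a.
have r_refl : forall u, r u u by move=> u; rewrite /r edist_xx.
have r_sym : forall u v, r u v -> r v u by move=> u v; rewrite /r edist_sym.
have r_trans : forall u v w, u \in E -> w \in E -> r u v -> r v w -> r u w.
  move=> u v w uE' wE h1 h2; apply: gap => //.
  by apply: lt_le_trans (edist_lt2 h1 h2) _; rewrite ha; nra.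
have [x1 x1E [y1 y1E nr]] : exists2 x, x \in E & exists2 y, y \in E & ~~ r x y.
  case: (boolP (all (fun u => all (r u) E) E)) => [/allP H | /allPn [x xE /allPn [y yE h]]];
    last by exists x => //; exists y.
  exfalso.
  have : d <= a.
    apply: diam_le; first exact: ltW.
    by move=> u v uE' vE; apply: ltW; exact: (allP (H u uE') v vE).
  have := tle j; rewrite -/tau; rewrite ha; nra.
pose cls u := [seq w <- E | r u w].
have Hsame : forall u u' z, u \in E -> u' \in E -> z \in cls u -> z \in cls u' -> cls u = cls u'.
  move=> u u' z uE' u'E; rewrite !mem_filter => /andP[h1 zE] /andP[h2 _].
  apply: eq_in_filter => w wE; apply/idP/idP => h.
    exact: (r_trans u' z w u'E wE h2 (r_trans z u w zE wE (r_sym _ _ h1) h)).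
  exact: (r_trans u z w uE' wE h1 (r_trans z u' w zE wE (r_sym _ _ h2) h)).
pose P := undup [seq cls u | u <- E].
have Hcls : forall B, B \in P -> exists2 u, u \in E & B = cls u.
  by move=> B; rewrite mem_undup => /mapP.
have uP : uniq P by exact: undup_uniq.
have Hdisj : forall B B' z, B \in P -> B' \in P -> z \in B -> z \in B' -> B = B'.
  move=> B B' z /Hcls [u uE' ->] /Hcls [u' u'E ->]; exact: Hsame.
exists tau, P.
split.
  rewrite /tau /t.
  have -> : - ((1 + 5 * (k * k)%:R) / eps) = - (1 / eps) + (- (5 / eps)) * (k * k)%:R.
    by ring.
  rewrite expRD expRM_natr -/q -/e1.
  have hj : q ^+ (k * k) <= q ^+ j.
    rewrite -(subnKC jN) exprD; apply: ler_piMr; first by rewrite ltW // exprn_gt0.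
    apply: exprn_ile1; [exact: ltW|lra].
  rewrite mulrA [e1 * _]mulrC; apply: ler_wpM2r; first exact: ltW.
  by apply: ler_wpM2r => //; exact: ltW.
split; first exact: tle.
split.
  split.
    apply: uniq_perm => //.
      apply: uniq_flatten_disj => // B /Hcls [u _ ->]; exact: filter_uniq.
    move=> z; apply/flattenP/idP => [[B /Hcls [u _ ->]]|zE].
      by rewrite mem_filter => /andP[].
    exists (cls z); first by rewrite mem_undup; apply: map_f.
    by rewrite mem_filter zE r_refl.
  move=> B /Hcls [u uE' ->]; apply/eqP => h.
  have : u \in cls u by rewrite mem_filter r_refl uE'.
  by rewrite h.
split.
  move=> B /Hcls [u uE' ->].
  have sub : {subset cls u <= E} by move=> w; rewrite mem_filter => /andP[].
  have [z zE znB] : exists2 z, z \in E & z \notin cls u.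
    case: (boolP (x1 \in cls u)) => hx; last by exists x1.
    exists y1 => //; apply/negP => hy; move: hx hy; rewrite !mem_filter => /andP[h1 _] /andP[h2 _].
    by rewrite (r_trans x1 u y1 x1E y1E (r_sym _ _ h1) h2) in nr.
  have : (size (z :: cls u) <= size E)%N.
    apply: uniq_leq_size; first by rewrite /= znB filter_uniq.
    by move=> w; rewrite inE => /orP[/eqP ->|/sub].
  move=> /= h; move: (leq_trans h Ek); case: (k) => //.
split.
  move=> B /Hcls [u uE' ->]; rewrite -ha; apply: diam_le; first exact: ltW.
  move=> v w; rewrite !mem_filter => /andP[h1 vE] /andP[h2 wE]; apply: ltW.
  exact: (r_trans v u w vE wE (r_sym _ _ h1) h2).
move=> i i' iP i'P ii' v w hv hw.
have Bi : nth [::] P i \in P by exact: mem_nth.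
have Bi' : nth [::] P i' \in P by exact: mem_nth.
have vE : v \in E by move: (Bi) hv => /Hcls [u _ ->]; rewrite mem_filter => /andP[].
have wE : w \in E by move: (Bi') hw => /Hcls [u _ ->]; rewrite mem_filter => /andP[].
rewrite leNgt; apply/negP => /(gap _ _ vE wE) hr.
have : nth [::] P i = nth [::] P i'.
  move: (Bi) (Bi') hv hw => /Hcls [u uE' e] /Hcls [u' u'E e'].
  rewrite e e' => hv hw; apply: (Hsame u u' w) => //.
  move: hv hw; rewrite !mem_filter => /andP[h1 _] /andP[_ _]; rewrite wE andbT.
  exact: (r_trans u v w).
by move/eqP; rewrite nth_uniq // (negbTE ii').
Qed.
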